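(* Let $L:\mathbb{R}^k\to\mathbb{R}^m$ be linear. If $t(L)>\frac{15}{16}2^{k-1}$ and $t(L)\neq 2^{k-1}$, then $L(e_i)\in\{-1,0,1\}^m$ for every $i\in[k]$.
   Context: $\mathbb{H}^n=\{0,1\}^n$, $e_1,\dots,e_k$ is the standard basis of $\mathbb{R}^k$, and $t(L)=|L^{-1}(\mathbb{H}^m)\cap\mathbb{H}^k|$. *)

(* Defs.v *)
From HB Require Import structures.
From mathcomp Require Import all_boot all_order all_algebra.
From mathcomp Require Import reals.
Set Implicit Arguments. Unset Strict Implicit. Unset Printing Implicit Defensive.
Import Order.TTheory GRing.Theory Num.Theory.
Local Open Scope ring_scope.

Definition cube_vec (R : realType) (k : nat) (x : {ffun 'I_k -> bool}) : 'cV[R]_k :=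
  \col_i (x i)%:R.

Definition in_cube (R : realType) (m : nat) (v : 'cV[R]_m) : bool :=
  [forall j, (v j 0 == 0) || (v j 0 == 1)].

Definition tL (R : realType) (k m : nat) (L : {linear 'cV[R]_k -> 'cV[R]_m}) : nat :=
  #|[set x : {ffun 'I_k -> bool} | in_cube (L (cube_vec R x))]|.

Definition std_basis (R : realType) (k : nat) (i : 'I_k) : 'cV[R]_k := delta_mx i 0.

(* Main.v *)
Require Import Defs.
From HB Require Import structures.
From mathcomp Require Import all_boot all_order all_algebra.
From mathcomp Require Import reals.
From mathcomp Require Import zify ring lra.
Set Implicit Arguments. Unset Strict Implicit. Unset Printing Implicit Defensive.
Import Order.TTheory GRing.Theory Num.Theory.
Local Open Scope ring_scope.

Section S.
Variables (R : realType) (k m : nat) (L : {linear 'cV[R]_k -> 'cV[R]_m}).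

Definition A (d : 'I_k) (j : 'I_m) : R := L (std_basis R d) j 0.
Definition f (j : 'I_m) (x : {ffun 'I_k -> bool}) : R := \sum_d (x d)%:R * A d j.

Lemma Lform x j : L (cube_vec R x) j 0 = f j x.
Proof.
have -> : cube_vec R x = \sum_d (x d)%:R *: std_basis R d.
  apply/matrixP => a b; rewrite /cube_vec mxE summxE (bigD1 a) //= big1.
    by rewrite !mxE ord1 !eqxx mulr1 addr0.
  by move=> d /negPf nd; rewrite !mxE eq_sym nd mulr0.
rewrite linear_sum summxE; apply: eq_bigr => d _.
by rewrite linearZ mxE.
Qed.

Definition flip (x : {ffun 'I_k -> bool}) (d : 'I_k) : {ffun 'I_k -> bool} :=
  [ffun l => if l == d then ~~ x l else x l].

Lemma f_flip j x d : f j (flip x d) = f j x + (if x d then - A d j else A d j).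
Proof.
rewrite /f (bigD1 d) //= [in RHS](bigD1 d) //= ffunE eqxx.
rewrite (eq_bigr (fun l => (x l)%:R * A l j)); last first.
  by move=> l /negPf nl; rewrite ffunE nl.
by case: (x d) => /=; rewrite ?mul1r ?mul0r; ring.
Qed.

Lemma f_agree j (x y : {ffun 'I_k -> bool}) : (forall d, A d j != 0 -> x d = y d) -> f j x = f j y.
Proof.
move=> H; apply: eq_bigr => d _.
by have [->|/H ->] := eqVneq (A d j) 0; rewrite ?mulr0.
Qed.

End S.

Section C.
Local Open Scope nat_scope.
Variable k : nat.
Local Notation cube := {ffun 'I_k -> bool}.
Definition xorf (x w : cube) : cube := [ffun l => x l (+) w l].

Lemma xorfK w : involutive (xorf^~ w).
Proof. by move=> x; apply/ffunP => l; rewrite !ffunE addbK. Qed.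

Lemma count_fiber (Y : {set cube}) (D : {set 'I_k}) : #|D| <= 4 ->
  (forall x : cube, exists y : cube, (forall l, l \notin D -> y l = x l) /\ y \notin Y) ->
  16 * #|Y| <= 15 * 2 ^ k.
Proof.
move=> hD H.
pose W := [set w : cube | [forall l, (l \notin D) ==> ~~ w l]].
have Wn : #|W| <= 16.
  have -> : #|W| = #|[set [set l | (w : cube) l] | w in W]|.
    rewrite card_in_imset // => w1 w2 _ _ e; apply/ffunP => l.
    by move/setP: e => /(_ l); rewrite !inE.
  apply: (leq_trans (subset_leq_card (_ : _ \subset powerset D))); last first.
    by rewrite card_powerset; apply: (leq_trans (leq_pexp2l _ hD)).
  apply/subsetP => S /imsetP [w]; rewrite inE => /forallP hw ->.
  rewrite inE; apply/subsetP => l; rewrite inE => wl.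
  by apply: contraLR wl => nl; move/implyP: (hw l) => /(_ nl).
have inW (x y : cube) : (forall l, l \notin D -> y l = x l) -> xorf x y \in W.
  move=> e; rewrite inE; apply/forallP => l; apply/implyP => /e; rewrite ffunE => ->.
  by rewrite addbb.
have [y0 [e0 _]] := H [ffun => false].
have Wpos : 0 < #|W| by apply/card_gt0P; exists (xorf [ffun => false] y0); exact: inW.
have C1 x : #|[set w in W | xorf x w \in Y]| <= #|W| - 1.
  have [y [e ny]] := H x.
  have w0W := inW x y e.
  rewrite (cardsD1 (xorf x y) W) w0W add1n subn1 /=.
  apply: subset_leq_card; apply/subsetP => w; rewrite !inE => /andP [wW xY].
  rewrite wW andbT; apply: contraNneq ny => ew.
  move: xY; rewrite ew (_ : xorf x (xorf x y) = y) //.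
  by apply/ffunP => l; rewrite !ffunE addKb.
have C2 : \sum_(x : cube) #|[set w in W | xorf x w \in Y]| = #|W| * #|Y|.
  transitivity (\sum_(x : cube) \sum_(w in W) (xorf x w \in Y : nat)).
    apply: eq_bigr => x _; rewrite -sum1_card [LHS]big_mkcond [RHS]big_mkcond.
    by apply: eq_bigr => w _; rewrite in_set; case: (w \in W); case: (_ \in Y).
  rewrite exchange_big /= -sum_nat_const; apply: eq_bigr => w _.
  rewrite -[RHS](card_preimset Y (can_inj (xorfK w))) -sum1_card [RHS]big_mkcond /=.
  by apply: eq_bigr => x _; rewrite inE; case: (_ \in Y).
have : #|W| * #|Y| <= 2 ^ k * (#|W| - 1).
  rewrite -C2; apply: leq_trans; first by apply: leq_sum => x _; exact: C1.
  by rewrite sum_nat_const card_ffun card_bool card_ord.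
move: Wn Wpos; nia.
Qed.
End C.

Section M.
Variables (R : realType) (k m : nat) (L : {linear 'cV[R]_k -> 'cV[R]_m}) (i : 'I_k) (j0 : 'I_m).
Local Notation cube := {ffun 'I_k -> bool}.
Local Notation A := (A L).
Local Notation f := (f L).
Local Notation flip := (@flip k).
Hypothesis hc : ~~ [|| A i j0 == -1, A i j0 == 0 | A i j0 == 1].

Definition in01 (v : R) := (v == 0) || (v == 1).
Definition T : {set cube} := [set x | in_cube (L (cube_vec R x))].
Definition Y : {set cube} := [set x | (x \in T) || (flip x i \in T)].

Lemma inT x : (x \in T) = [forall j, in01 (f j x)].
Proof. by rewrite inE /in_cube; apply: eq_forallb => j; rewrite Lform. Qed.

Lemma notT z j : ~~ in01 (f j z) -> z \notin T.
Proof. by move=> h; rewrite inT; apply/forallP => /(_ j); apply/negP. Qed.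

Lemma T01 z j : z \in T -> in01 (f j z).
Proof. by rewrite inT => /forallP. Qed.

Lemma flipK d : involutive (flip^~ d).
Proof. by move=> x; apply/ffunP => l; rewrite !ffunE; case: (l == d) => //=; exact: negbK. Qed.

Lemma flipC x a b : flip (flip x a) b = flip (flip x b) a.
Proof.
apply/ffunP => l; rewrite !ffunE.
by case: (l == a); case: (l == b).
Qed.

Lemma flip_other x a l : l != a -> flip x a l = x l.
Proof. by rewrite ffunE => /negPf ->. Qed.

Lemma flip_self x a : flip x a a = ~~ x a.
Proof. by rewrite ffunE eqxx. Qed.

Lemma no_both x : in01 (f j0 x) -> ~~ in01 (f j0 (flip x i)).
Proof.
move=> h; apply: contra hc => h2; move: h h2; rewrite /in01 f_flip.
case: (x i) => /orP [] /eqP -> /orP [] /eqP h; apply/or3P;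
  first [constructor 1; apply/eqP; lra | constructor 2; apply/eqP; lra | constructor 3; apply/eqP; lra].
Qed.


Lemma notboth x : x \in T -> flip x i \notin T.
Proof. by move=> /(T01 j0) /no_both; apply: notT. Qed.

Lemma cardY : #|Y| = (2 * #|T|)%N.
Proof.
have -> : Y = T :|: (flip^~ i @^-1: T) by apply/setP => x; rewrite !inE.
have -> : #|T :|: (flip^~ i @^-1: T)| = (#|T :|: (flip^~ i @^-1: T)| + #|T :&: (flip^~ i @^-1: T)|)%N.
  rewrite (_ : T :&: _ = set0) ?cards0 ?addn0 //.
  apply/setP => x; rewrite in_set0; apply/negP => /setIP [hx]; rewrite inE => hf.
  by move: (notboth hx); rewrite hf.
by rewrite cardsUI card_preimset ?addnn -?mul2n //; exact: can_inj (flipK i).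
Qed.

Lemma Y_T z u : in01 (f j0 z) -> (u = z \/ u = flip z i) -> u \in Y -> z \in T.
Proof.
move=> hz hu; have nT : flip z i \notin T by apply: notT (no_both hz).
rewrite inE; case: hu => ->; first by case/orP => // /negPn; rewrite (negPf nT).
by rewrite flipK orbC; case/orP => // h; move: nT; rewrite h.
Qed.


Lemma mem4 (v a b c d : R) : v = a \/ v = b \/ v = c \/ v = d -> v \in [:: a; b; c; d].
Proof. by move=> [->|[->|[->|->]]]; rewrite !inE eqxx ?orbT. Qed.

Definition g (z : cube) := f j0 z - (z i)%:R * A i j0.

Lemma gY z : z \in Y -> g z \in [:: 0; 1; - A i j0; 1 - A i j0].
Proof.
rewrite inE => /orP [] /(T01 j0); rewrite /in01 ?f_flip /g; case: (z i) => /orP [] /eqP e;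
  apply: mem4; rewrite /= ?mul1r ?mul0r;
  first [left; lra | right; left; lra | right; right; left; lra | right; right; right; lra].
Qed.

Lemma caseA (s : seq 'I_k) : uniq s -> size s = 4%N ->
  (forall d, d \in s -> (A d j0 != 0) && (d != i)) ->
  forall x : cube, exists y : cube, (forall l, l \notin [set l in s] -> y l = x l) /\ y \notin Y.
Proof.
move=> us ss hs x.
pose sg l := 0 < A l j0.
pose p n : cube := [ffun l => if l \in s then (if (index l s < n)%N then sg l else ~~ sg l) else x l].
have iS : i \notin s by apply/negP => /hs /andP [_]; rewrite eqxx.
have pout n l : l \notin s -> p n l = x l by rewrite ffunE => /negPf ->.
have pstep n : (n < 4)%N -> p n.+1 = flip (p n) (nth i s n).
  move=> hn; apply/ffunP => l; rewrite !ffunE.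
  case: (boolP (l \in s)) => ls.
    case: (eqVneq l (nth i s n)) => [->|ne].
      by rewrite index_uniq ?ss // ltnSn ltnn negbK.
    have : index l s != n by apply: contra_neq ne => <-; rewrite nth_index.
    by rewrite ltnS leq_eqVlt => /negPf ->.
  have : l != nth i s n by apply: contraNneq ls => ->; rewrite mem_nth ?ss.
  by move/negPf ->.
have gstep n : (n < 4)%N -> g (p n) < g (p n.+1).
  move=> hn; rewrite pstep // /g f_flip flip_other; last first.
    by apply: contraNneq iS => ->; rewrite mem_nth ?ss.
  have ds : nth i s n \in s by rewrite mem_nth ?ss.
  rewrite [p n (nth i s n)]ffunE ds index_uniq ?ss // ltnn.
  have := hs _ ds => /andP [nz _]; rewrite /sg.
  set a := A (nth i s n) j0 in nz *; set t := (_ * A i j0); set F := f j0 (p n).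
  case/orP: (lt_total nz) => h.
    by rewrite (lt_gtF h) /=; lra.
  by rewrite h /=; lra.
case: (boolP [forall n : 'I_5, p n \in Y]) => [/forallP hall | /forallPn [n hn]]; last first.
  by exists (p n); split => // l; rewrite inE => /pout.
have h01 := gstep 0%N isT; have h12 := gstep 1%N isT; have h23 := gstep 2%N isT; have h34 := gstep 3%N isT.
have h02 := lt_trans h01 h12; have h03 := lt_trans h02 h23; have h04 := lt_trans h03 h34.
have h13 := lt_trans h12 h23; have h14 := lt_trans h13 h34; have h24 := lt_trans h23 h34.
have u : uniq [:: g (p 0%N); g (p 1%N); g (p 2%N); g (p 3%N); g (p 4%N)].
  rewrite /= !inE !negb_or.
  by rewrite (lt_eqF h01) (lt_eqF h02) (lt_eqF h03) (lt_eqF h04) (lt_eqF h12) (lt_eqF h13)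
    (lt_eqF h14) (lt_eqF h23) (lt_eqF h24) (lt_eqF h34).
have sub : {subset [:: g (p 0%N); g (p 1%N); g (p 2%N); g (p 3%N); g (p 4%N)] <= [:: 0; 1; - A i j0; 1 - A i j0]}.
  apply/allP; rewrite /= !gY //.
  1-5: first [exact: (hall (@Ordinal 5 0 isT)) | exact: (hall (@Ordinal 5 1 isT))
    | exact: (hall (@Ordinal 5 2 isT)) | exact: (hall (@Ordinal 5 3 isT)) | exact: (hall (@Ordinal 5 4 isT))].
by have := uniq_leq_size u sub.
Qed.


Lemma square (v a b : R) : a != 0 -> b != 0 -> in01 v -> in01 (v + a) -> in01 (v + b) ->
  in01 (v + a + b) -> False.
Proof.
move=> /lt_total /orP ha /lt_total /orP hb; rewrite /in01.
move=> /orP [] /eqP e1 /orP [] /eqP e2 /orP [] /eqP e3 /orP [] /eqP e4;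
  case: ha => ha; case: hb => hb; lra.
Qed.

Lemma foldl_flipi (x : cube) ds : foldl flip (flip x i) ds = flip (foldl flip x ds) i.
Proof. by elim: ds x => //= d ds IH x; rewrite flipC IH. Qed.

Lemma f_foldl (z : cube) ds : (forall d, d \in ds -> A d j0 == 0) -> f j0 (foldl flip z ds) = f j0 z.
Proof.
elim: ds z => //= d ds IH z h; rewrite IH; last by move=> e he; apply: h; rewrite inE he orbT.
by rewrite f_flip (eqP (h d (mem_head _ _))) oppr0; case: (z d); rewrite addr0.
Qed.

Lemma shiftT (z0 x : cube) ds : z0 \in T -> (z0 = x \/ z0 = flip x i) ->
  (forall d, d \in ds -> A d j0 == 0) -> foldl flip x ds \in Y -> foldl flip z0 ds \in T.
Proof.
move=> hz hzx hds; apply: Y_T.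
  by rewrite f_foldl //; exact: T01.
case: hzx => ->; first by left.
by right; rewrite foldl_flipi flipK.
Qed.

Lemma caseB2 (j : 'I_m) (d1 d2 : 'I_k) : d1 != d2 -> A d1 j != 0 -> A d2 j != 0 ->
  A d1 j0 == 0 -> A d2 j0 == 0 ->
  forall x : cube, exists y : cube, (forall l, l \notin [set d1; d2] -> y l = x l) /\ y \notin Y.
Proof.
move=> d12 a1 a2 b1 b2 x.
case: (boolP [&& x \in Y, flip x d1 \in Y, flip x d2 \in Y & flip (flip x d1) d2 \in Y]);
  last first.
  rewrite !negb_and => /or4P [] hn; [exists x | exists (flip x d1) | exists (flip x d2) |
    exists (flip (flip x d1) d2)]; split => // l; rewrite !inE negb_or => /andP [n1 n2];
    by rewrite ?flip_other.
case/and4P => h0 h1 h2 h3.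
have [z0 [hz hzx]] : exists z0, z0 \in T /\ (z0 = x \/ z0 = flip x i).
  move: h0; rewrite inE => /orP [] h; [exists x | exists (flip x i)]; split => //; by [left|right].
have hd1 : forall d, d \in [:: d1] -> A d j0 == 0 by move=> d; rewrite inE => /eqP ->.
have hd2 : forall d, d \in [:: d2] -> A d j0 == 0 by move=> d; rewrite inE => /eqP ->.
have hd12 : forall d, d \in [:: d1; d2] -> A d j0 == 0.
  by move=> d; rewrite !inE => /orP [] /eqP ->.
have t0 := T01 j hz.
have t1 := T01 j (shiftT hz hzx hd1 h1).
have t2 := T01 j (shiftT hz hzx hd2 h2).
have t3 := T01 j (shiftT hz hzx hd12 h3).
move: t1 t2 t3; rewrite /= !f_flip flip_other 1?eq_sym //.
have na : (if z0 d1 then - A d1 j else A d1 j) != 0 by case: (z0 d1); rewrite ?oppr_eq0.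
have nb : (if z0 d2 then - A d2 j else A d2 j) != 0 by case: (z0 d2); rewrite ?oppr_eq0.
move=> t1 t2 t3; case: (square na nb t0 t1 t2 t3).
Qed.


Definition Dg (j2 : 'I_m) : {set 'I_k} := [set d | ((A d j0 != 0) || (A d j2 != 0)) && (d != i)].

Lemma caseBg (x0 : cube) (j2 : 'I_m) : ~~ in01 (f j0 x0) -> ~~ in01 (f j2 (flip x0 i)) ->
  forall x : cube, exists y : cube, (forall l, l \notin Dg j2 -> y l = x l) /\ y \notin Y.
Proof.
move=> n0 n2 x.
pose y : cube := [ffun l => if l \in Dg j2 then x0 l else x l].
exists y; split; first by move=> l; rewrite ffunE => /negPf ->.
have ag (u v : cube) : (forall d, (d \in Dg j2) || (d == i) -> u d = v d) ->
    f j0 u = f j0 v /\ f j2 u = f j2 v.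
  move=> h; split; apply: f_agree => d nz; apply: h; rewrite inE nz ?orbT /=;
    by case: (d == i).
have yD d : d \in Dg j2 -> y d = x0 d by rewrite ffunE => ->.
have Di d : d \in Dg j2 -> d != i by rewrite inE => /andP [].
rewrite [_ \in Y]inE negb_or; case: (eqVneq (y i) (x0 i)) => e.
  have [e1 _] : f j0 y = f j0 x0 /\ f j2 y = f j2 x0.
    by apply: ag => d /orP [/yD //| /eqP ->].
  have [_ e2] : f j0 (flip y i) = f j0 (flip x0 i) /\ f j2 (flip y i) = f j2 (flip x0 i).
    apply: ag => d /orP [dD|/eqP ->]; last by rewrite !flip_self e.
    by rewrite !flip_other ?Di // yD.
  have m1 : y \notin T by apply: (notT (j := j0)); rewrite e1.
  have m2 : flip y i \notin T by apply: (notT (j := j2)); rewrite e2.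
  by rewrite m1 m2.
have [_ e2] : f j0 y = f j0 (flip x0 i) /\ f j2 y = f j2 (flip x0 i).
  apply: ag => d /orP [dD|/eqP ->]; last by rewrite flip_self; move: e; case: (y i); case: (x0 i).
  by rewrite flip_other ?Di // yD.
have [e1 _] : f j0 (flip y i) = f j0 x0 /\ f j2 (flip y i) = f j2 x0.
  apply: ag => d /orP [dD|/eqP ->]; last by rewrite flip_self; move: e; case: (y i); case: (x0 i).
  by rewrite flip_other ?Di // yD.
have m1 : y \notin T by apply: (notT (j := j2)); rewrite e2.
have m2 : flip y i \notin T by apply: (notT (j := j0)); rewrite e1.
by rewrite m1 m2.
Qed.


Lemma notT_ex z : z \notin T -> exists j, ~~ in01 (f j z).
Proof. by rewrite inT => /forallPn. Qed.

Lemma key : (exists x1 : cube, x1 \notin Y) -> (32 * #|T| <= 15 * 2 ^ k)%N.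
Proof.
move=> [x1 hx1].
suff: (16 * #|Y| <= 15 * 2 ^ k)%N by rewrite cardY mulnA.
pose S0 := [set d | (A d j0 != 0) && (d != i)].
case: (leqP 4 #|S0|) => h4.
  pose s := take 4 (enum S0).
  have ss : size s = 4%N.
    by rewrite size_take -cardE; case: (ltnP 4 #|S0|) => // h; apply/eqP; rewrite eqn_leq h h4.
  apply: (@count_fiber _ Y [set l in s]).
    by rewrite cardsE; apply: leq_trans (card_size s) _; rewrite ss.
  apply: caseA; first by rewrite take_uniq ?enum_uniq.
    exact: ss.
  by move=> d /mem_take; rewrite mem_enum inE.
pose Sj j := [set d | (A d j != 0) && (A d j0 == 0) && (d != i)].
case: (boolP [exists j, (1 < #|Sj j|)%N]) => [/existsP [j /card_gt1P [d1 [d2 [h1 h2 h12]]]]| hn].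
  move: h1 h2; rewrite !inE => /andP [/andP [a1 b1] _] /andP [/andP [a2 b2] _].
  apply: (@count_fiber _ Y [set d1; d2]); first by rewrite cards2; case: (d1 != d2).
  exact: caseB2 h12 a1 a2 b1 b2.
have hj j : (#|Sj j| <= 1)%N.
  by move/existsPn: hn => /(_ j); rewrite -leqNgt.
have [x0 [j2 [n0 n2]]] : exists x0 j2, ~~ in01 (f j0 x0) /\ ~~ in01 (f j2 (flip x0 i)).
  have [hT1 hT2] : x1 \notin T /\ flip x1 i \notin T.
    by move: hx1; rewrite [_ \in Y]inE negb_or => /andP.
  case: (boolP (in01 (f j0 x1))) => h.
    have [j2 hj2] := notT_ex hT1.
    by exists (flip x1 i), j2; rewrite flipK; split => //; apply: no_both.
  have [j2 hj2] := notT_ex hT2.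
  by exists x1, j2.
apply: (@count_fiber _ Y (Dg j2)); last exact: caseBg n0 n2.
have sub : Dg j2 \subset S0 :|: Sj j2.
  apply/subsetP => d; rewrite !inE => /andP [/orP [] h ->]; first by rewrite h.
  by rewrite h /= andbT orbC; case: (A d j0 == 0).
apply: leq_trans (subset_leq_card sub) _.
apply: leq_trans (leq_addr #|S0 :&: Sj j2| _) _; rewrite cardsUI.
exact: (@leq_add _ _ 3 1 h4 (hj j2)).
Qed.

End M.

Theorem lemma4p3 (R : realType) (k m : nat) (L : {linear 'cV[R]_k -> 'cV[R]_m}) :
  (tL L)%:R > 15 / 16 * (2 ^+ k / 2 : R) ->
  ((tL L)%:R != (2 ^+ k / 2 : R)) ->
  forall i : 'I_k, forall j : 'I_m,
    [|| L (std_basis R i) j 0 == -1, L (std_basis R i) j 0 == 0 | L (std_basis R i) j 0 == 1].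
Proof.
move=> h1 h2 i j; apply/idPn => hc.
have eT : tL L = #|T L| by [].
have ex : exists x1, x1 \notin Y L i.
  case: (boolP [exists x, x \notin Y L i]) => [/existsP //|/existsPn hall].
  have eY : Y L i = setT by apply/setP => x; rewrite in_setT; apply/negPn/hall.
  have := cardY hc; rewrite eY cardsT card_ffun card_bool card_ord -eT => e.
  move: h2; rewrite (_ : 2 ^+ k = (2 ^ k)%:R); last by rewrite natrX.
  rewrite e natrM => /eqP [].
  by rewrite [2 * _]mulrC mulfK // pnatr_eq0.
have := key hc ex; rewrite -eT => hk.
have : ((32 * tL L)%:R <= (15 * 2 ^ k)%:R :> R) by rewrite ler_nat.
rewrite !natrM natrX => h3.
move: h1 h3; set t := (tL L)%:R; set P := 2 ^+ k; clearbody t P; lra.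
Qed.
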